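(* For all $p,q\ge1$ and every set $X$, the free Burnside monoid $B^I_X(p,q)$ is isomorphic (as an $X$-monoid) to $\mathrm{Rh}_X(B^I_X(p,q))$.
   Context: $B_X(p,q)$ is the free semigroup on $X$ in the variety defined by $x^{p+q}=x^p$, i.e. presented by $\langle X\mid u^{p+q}=u^p\ (u\in X^+)\rangle$; $B^I_X(p,q)$ is obtained by adjoining a new identity $I$, regarded as an $X$-monoid via $X\subseteq B_X(p,q)$. For a monoid $N$ generated by $X$, the Rhodes expansion $\mathrm{Rh}(N)$ is the monoid of finite chains $(n_k<_{\mathcal L}\cdots<_{\mathcal L}n_0=1)$ with product $\sigma\tau=\mathrm{lm}(n_km\le_{\mathcal L}\cdots\le_{\mathcal L}n_1m\le_{\mathcal L}\tau)$ ($m$ the leftmost term of $\tau$, $\mathrm{lm}$ keeping the leftmost element of each block of $\mathcal L$-equivalent terms), and $\mathrm{Rh}_X(N)$ is its submonoid generated by the chains $(x<_{\mathcal L}1)$, $x\in X$; the canonical morphism to $N$ sends a chain to its leftmost term. *)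

(* Defs.v *)
From Stdlib Require Import List Relations ClassicalEpsilon Sorted.
Import ListNotations.
Set Implicit Arguments.

Fixpoint wpow (X : Type) (u : list X) (n : nat) : list X :=
  match n with 0 => [] | S n' => u ++ wpow u n' end.

Inductive bstep (X : Type) (p q : nat) : list X -> list X -> Prop :=
| bstep_intro : forall w1 u w2, u <> [] ->
    bstep p q (w1 ++ wpow u (p + q) ++ w2) (w1 ++ wpow u p ++ w2).

Definition bcong (X : Type) (p q : nat) : relation (list X) :=
  clos_refl_sym_trans _ (bstep (X:=X) p q).

(* B^I_X(p,q) = X^* / bcong  (the class of the empty word is the adjoined identity I) *)
Definition BI (X : Type) (p q : nat) : Type :=
  { P : list X -> Prop | exists w, P = bcong p q w }.

Definition bcls (X : Type) (p q : nat) (w : list X) : BI X p q :=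
  exist (fun P => exists w', P = bcong p q w') (bcong p q w) (ex_intro _ w eq_refl).

Definition brep (X : Type) (p q : nat) (a : BI X p q) : list X :=
  proj1_sig (constructive_indefinite_description _ (proj2_sig a)).

Definition bmul (X : Type) (p q : nat) (a b : BI X p q) : BI X p q :=
  bcls p q (brep a ++ brep b).

Definition bone (X : Type) (p q : nat) : BI X p q := bcls p q [].

Definition bgen (X : Type) (p q : nat) (x : X) : BI X p q := bcls p q [x].

Section Rhodes.
Variables (N : Type) (mul : N -> N -> N) (one : N).

Definition leL (a b : N) : Prop := exists s, a = mul s b.
Definition ltL (a b : N) : Prop := leL a b /\ ~ leL b a.
Definition eqL (a b : N) : Prop := leL a b /\ leL b a.

Definition eqLb (a b : N) : bool :=
  if excluded_middle_informative (eqL a b) then true else false.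

Fixpoint lm_aux (a : N) (r : list N) : list N :=
  match r with
  | [] => [a]
  | b :: r' => if eqLb a b then lm_aux a r' else a :: lm_aux b r'
  end.

Definition lm (l : list N) : list N :=
  match l with [] => [] | a :: r => lm_aux a r end.

(* A chain (n_k <_L ... <_L n_0 = 1) is the list [n_k; ...; n_1; n_0] *)
Definition is_chain (c : list N) : Prop :=
  exists ns, c = ns ++ [one] /\ Sorted ltL c.

(* sigma tau = lm(n_k m <= ... <= n_1 m <= tau), m = leftmost term of tau *)
Definition rh_mul (sigma tau : list N) : list N :=
  lm (map (fun n => mul n (hd one tau)) (removelast sigma) ++ tau).

Inductive RhX (X : Type) (g : X -> N) : list N -> Prop :=
| RhX_one : RhX g [one]
| RhX_gen : forall x, RhX g [g x; one]
| RhX_mul : forall s t, RhX g s -> RhX g t -> RhX g (rh_mul s t).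

End Rhodes.

(* Main.v *)
Require Import Defs.
From Stdlib Require Import List Relations Lia Arith PeanoNat ClassicalEpsilon FunctionalExtensionality PropExtensionality ProofIrrelevance.
Import ListNotations.

Section B.
Variables (X : Type) (p q : nat).
Hypothesis hp : 1 <= p.
Hypothesis hq : 1 <= q.

Notation bc := (bcong (X:=X) p q).
Notation M := (BI X p q).
Notation cls := (bcls (X:=X) p q).
Notation mul := (@bmul X p q).
Notation one := (bone X p q).
Notation E := (eqL mul).
Notation LM := (lm mul).
Notation LMA := (lm_aux mul).

Lemma wpow_add (u : list X) a b : wpow u (a + b) = wpow u a ++ wpow u b.
Proof. induction a; simpl; [auto| rewrite IHa; apply app_assoc]. Qed.

Lemma bstep_ctx (l r x y : list X) : bstep p q x y -> bstep p q (l ++ x ++ r) (l ++ y ++ r).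
Proof.
  intros [w1 u w2 Hu]. pose proof (bstep_intro p q (l++w1) (w2++r) Hu) as H.
  rewrite <- !app_assoc in *. exact H.
Qed.

Lemma bc_ctx (l r x y : list X) : bc x y -> bc (l ++ x ++ r) (l ++ y ++ r).
Proof.
  induction 1.
  - apply rst_step, bstep_ctx; auto.
  - apply rst_refl.
  - apply rst_sym; auto.
  - eapply rst_trans; eauto.
Qed.

Lemma bc_app (a a' b b' : list X) : bc a a' -> bc b b' -> bc (a ++ b) (a' ++ b').
Proof.
  intros H1 H2. apply rst_trans with (a' ++ b).
  - pose proof (bc_ctx [] b a a' H1) as H. exact H.
  - pose proof (bc_ctx a' [] b b' H2) as H. rewrite !app_nil_r in H. exact H.
Qed.

Lemma wpow_ne (u : list X) n : u <> [] -> 0 < n -> wpow u n <> [].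
Proof. intros Hu Hn. destruct n; [lia|]. simpl; intro H; apply app_eq_nil in H; tauto. Qed.

Lemma bstep_ne (x y : list X) : bstep p q x y -> x <> [] /\ y <> [].
Proof.
  intros [w1 u w2 Hu]. split; intro H; apply app_eq_nil in H; destruct H as [_ H];
  apply app_eq_nil in H; destruct H as [H _]; revert H; apply wpow_ne; auto; lia.
Qed.

Lemma bc_nil (x y : list X) : bc x y -> (x = [] <-> y = []).
Proof.
  induction 1.
  - apply bstep_ne in H; tauto.
  - tauto.
  - tauto.
  - tauto.
Qed.

Lemma bcls_eq (a b : list X) : bc a b -> cls a = cls b.
Proof.
  intro H. unfold bcls. apply subset_eq_compat.
  extensionality z. apply propositional_extensionality. split; intro.
  - eapply rst_trans; [apply rst_sym, H|]; auto.
  - eapply rst_trans; [apply H|]; auto.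
Qed.

Lemma bcls_inv (a b : list X) : cls a = cls b -> bc a b.
Proof.
  intro H. apply (f_equal (@proj1_sig _ _)) in H. simpl in H.
  rewrite H. apply rst_refl.
Qed.

Lemma bcls_brep (a : M) : cls (brep a) = a.
Proof.
  destruct a as [P HP]. unfold brep, bcls. simpl. apply subset_eq_compat.
  destruct (constructive_indefinite_description _ HP) as [w Hw]; simpl; auto.
Qed.

Lemma brep_bcls (w : list X) : bc w (brep (cls w)).
Proof. apply rst_sym, bcls_inv. apply bcls_brep. Qed.

Lemma bmul_cls (x y : list X) : mul (cls x) (cls y) = cls (x ++ y).
Proof. unfold bmul. apply bcls_eq. apply bc_app; apply rst_sym, brep_bcls. Qed.

Lemma bmul_assoc a b c : mul (mul a b) c = mul a (mul b c).
Proof.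
  rewrite <- (bcls_brep a), <- (bcls_brep b), <- (bcls_brep c).
  rewrite !bmul_cls, app_assoc. auto.
Qed.

Lemma bone_l a : mul one a = a.
Proof. rewrite <- (bcls_brep a). unfold bone. rewrite bmul_cls. auto. Qed.

Lemma E_refl a : E a a.
Proof. split; exists one; symmetry; apply bone_l. Qed.

Lemma leL_trans a b c : leL mul a b -> leL mul b c -> leL mul a c.
Proof. intros [s Hs] [t Ht]. exists (mul s t). subst. symmetry; apply bmul_assoc. Qed.

Lemma E_trans a b c : E a b -> E b c -> E a c.
Proof. intros [H1 H2] [H3 H4]; split; eapply leL_trans; eauto. Qed.

Lemma E_sym a b : E a b -> E b a.
Proof. intros [H1 H2]; split; auto. Qed.

Lemma E_mulr m a b : E a b -> E (mul a m) (mul b m).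
Proof.
  intros [[s Hs] [t Ht]]; split; [exists s; rewrite Hs | exists t; rewrite Ht]; apply bmul_assoc.
Qed.

Lemma eqLb_true a b : E a b -> eqLb mul a b = true.
Proof. intro H; unfold eqLb; destruct excluded_middle_informative; tauto. Qed.
Lemma eqLb_false a b : ~ E a b -> eqLb mul a b = false.
Proof. intro H; unfold eqLb; destruct excluded_middle_informative; tauto. Qed.
Lemma eqLb_E a b : eqLb mul a b = true -> E a b.
Proof. unfold eqLb; destruct excluded_middle_informative; auto; discriminate. Qed.

Lemma ne_not_one (s : list X) : s <> [] -> ~ E (cls s) one.
Proof.
  intros Hs [_ [t Ht]]. rewrite <- (bcls_brep t), bmul_cls in Ht.
  apply bcls_inv, bc_nil in Ht. apply Hs.
  destruct (brep t ++ s) eqn:Q. - apply app_eq_nil in Q; tauto.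
  - exfalso. assert (l0 := proj1 Ht eq_refl). discriminate.
Qed.


Inductive R1 : list M -> list M -> Prop :=
| R1_intro : forall pre a b r, E a b -> R1 (pre ++ a :: b :: r) (pre ++ a :: r).
Definition D := clos_refl_trans _ R1.

Lemma lma_del h pre a b r : E a b -> LMA h (pre ++ a :: b :: r) = LMA h (pre ++ a :: r).
Proof.
  intro Hab. revert h; induction pre as [|c pre IH]; intro h; simpl.
  - destruct (eqLb mul h a) eqn:Ha.
    + rewrite (eqLb_true h b); [auto|]. eapply E_trans; [apply eqLb_E|]; eauto.
    + rewrite (eqLb_true a b); auto.
  - destruct (eqLb mul h c); rewrite IH; auto.
Qed.

Lemma lm_R1 l l' : R1 l l' -> LM l = LM l'.
Proof.
  intros [pre a b r Hab]. destruct pre as [|c pre]; simpl.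
  - rewrite (eqLb_true a b); auto.
  - apply lma_del; auto.
Qed.

Lemma lm_D l l' : D l l' -> LM l = LM l'.
Proof. induction 1; [apply lm_R1; auto | auto | congruence]. Qed.

Lemma D_lift (F : list M -> list M) : (forall l l', R1 l l' -> R1 (F l) (F l')) ->
  forall l l', D l l' -> D (F l) (F l').
Proof. intros HF l l'; induction 1; [apply rt_step; auto | apply rt_refl | eapply rt_trans; eauto]. Qed.

Lemma R1_cons x l l' : R1 l l' -> R1 (x :: l) (x :: l').
Proof. intros [pre a b r H]. apply (R1_intro (x :: pre)); auto. Qed.

Lemma R1_app_l x l l' : R1 l l' -> R1 (x ++ l) (x ++ l').
Proof. intros [pre a b r H]. rewrite !app_assoc. apply R1_intro; auto. Qed.

Lemma R1_app_r x l l' : R1 l l' -> R1 (l ++ x) (l' ++ x).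
Proof. intros [pre a b r H]. rewrite <- !app_assoc. simpl. apply R1_intro; auto. Qed.

Lemma R1_map m l l' : R1 l l' -> R1 (map (fun n => mul n m) l) (map (fun n => mul n m) l').
Proof. intros [pre a b r H]. rewrite !map_app. simpl. apply R1_intro. apply E_mulr; auto. Qed.

Lemma D_app a a' b b' : D a a' -> D b b' -> D (a ++ b) (a' ++ b').
Proof.
  intros H1 H2. apply rt_trans with (a' ++ b).
  - apply (D_lift (fun l => l ++ b)); auto. intros; apply R1_app_r; auto.
  - apply (D_lift (fun l => a' ++ l)); auto. intros; apply R1_app_l; auto.
Qed.

Lemma D_lma a r : D (a :: r) (LMA a r).
Proof.
  revert a; induction r as [|b r IH]; intro a; simpl.
  - apply rt_refl.
  - destruct (eqLb mul a b) eqn:H.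
    + apply rt_trans with (a :: r); [|apply IH]. apply rt_step.
      apply (R1_intro [] a b r). apply eqLb_E; auto.
    + apply (D_lift (fun l => a :: l)); auto. intros; apply R1_cons; auto.
Qed.

Lemma D_lm l : D l (LM l).
Proof. destruct l; [apply rt_refl | apply D_lma]. Qed.

Lemma lma_app_one h l : ~ E h one -> (forall x, In x l -> ~ E x one) ->
  LMA h (l ++ [one]) = LMA h l ++ [one].
Proof.
  revert h; induction l as [|b l IH]; intros h Hh Hl; simpl.
  - rewrite eqLb_false; auto.
  - destruct (eqLb mul h b) eqn:Hb; rewrite IH; simpl; auto.
    all: intros; apply Hl; simpl; auto.
Qed.

Lemma lm_app_one l : (forall x, In x l -> ~ E x one) -> LM (l ++ [one]) = LM l ++ [one].
Proof.
  destruct l as [|h l]; intros Hl; simpl; auto.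
  apply lma_app_one; simpl in *; auto.
Qed.

Lemma lma_head a r : exists t, LMA a r = a :: t.
Proof.
  revert a; induction r as [|b r IH]; intro a; simpl; [eauto|].
  destruct (eqLb mul a b); eauto.
Qed.


Fixpoint sfxne (w : list X) : list (list X) :=
  match w with [] => [] | x :: w' => w :: sfxne w' end.
Definition Sf (w : list X) : list M := map cls (sfxne w ++ [[]]).
Definition chain (w : list X) : list M := LM (Sf w).

Lemma sfxne_app u v : sfxne (u ++ v) = map (fun s => s ++ v) (sfxne u) ++ sfxne v.
Proof. induction u; simpl; auto. f_equal; auto. Qed.

Lemma Sf_app u v : Sf (u ++ v) = map (fun s => cls (s ++ v)) (sfxne u) ++ Sf v.
Proof. unfold Sf. rewrite sfxne_app, <- app_assoc, map_app, map_map. auto. Qed.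

Lemma sfxne_in s z : In s (sfxne z) -> s <> [] /\ exists r, z = r ++ s.
Proof.
  induction z as [|x z IH]; simpl; [tauto|]. intros [H|H].
  - subst; split; [discriminate| exists []; auto].
  - destruct (IH H) as [H1 [r Hr]]. split; auto. exists (x :: r); subst; auto.
Qed.

Lemma Sf_head z : exists T, Sf z = cls z :: T.
Proof. destruct z; unfold Sf; simpl; eauto. Qed.

Lemma chain_head z : exists T, chain z = cls z :: T.
Proof. destruct (Sf_head z) as [T HT]. unfold chain. rewrite HT. simpl. apply lma_head. Qed.

Lemma chain_split u : chain u = LM (map cls (sfxne u)) ++ [one].
Proof.
  unfold chain, Sf. rewrite map_app. simpl. apply lm_app_one.
  intros x Hx. apply in_map_iff in Hx. destruct Hx as [s [<- Hs]].
  apply ne_not_one. apply (sfxne_in s u); auto.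
Qed.

Lemma chain_hom u v : chain (u ++ v) = rh_mul mul one (chain u) (chain v).
Proof.
  unfold rh_mul. rewrite (chain_split u). rewrite removelast_last.
  destruct (chain_head v) as [T HT]. rewrite HT. simpl hd. rewrite <- HT.
  unfold chain at 1. rewrite Sf_app.
  replace (map (fun s => cls (s ++ v)) (sfxne u))
    with (map (fun n => mul n (cls v)) (map cls (sfxne u))).
  2: { rewrite map_map. apply map_ext. intros; apply bmul_cls. }
  apply lm_D. apply D_app.
  - apply (D_lift (map (fun n => mul n (cls v)))); [intros; apply R1_map; auto|]. apply D_lm.
  - apply D_lm.
Qed.


Lemma sfx_decomp (u : list X) n : forall s r', wpow u n = r' ++ s ->
  exists r s0 k, u = r ++ s0 /\ s = s0 ++ wpow u k.
Proof.
  induction n as [|n IH]; intros s r' H; simpl in H.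
  - symmetry in H; apply app_eq_nil in H. destruct H as [_ ->].
    exists u, [], 0. rewrite app_nil_r; auto.
  - apply app_eq_app in H. destruct H as [l [[H1 H2]|[H1 H2]]].
    + exists r', l, n; auto.
    + apply (IH s l); auto.
Qed.

Lemma pump (u w2 : list X) j : u <> [] -> bc (wpow u (p + j * q) ++ w2) (wpow u p ++ w2).
Proof.
  intro Hu. induction j as [|j IH].
  - rewrite Nat.mul_0_l, Nat.add_0_r. apply rst_refl.
  - eapply rst_trans; [|apply IH].
    replace (p + S j * q) with ((p + q) + j * q) by lia.
    rewrite (wpow_add u (p+q) (j*q)), (wpow_add u p (j*q)), <- !app_assoc.
    pose proof (bstep_intro p q [] (wpow u (j * q) ++ w2) Hu) as H. simpl in H.
    apply rst_step. exact H.
Qed.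

Lemma key_E (u r s0 w2 : list X) K : u <> [] -> u = r ++ s0 -> p <= K ->
  E (cls (wpow u p ++ w2)) (cls (s0 ++ wpow u K ++ w2)).
Proof.
  intros Hu Hr HK. split.
  - set (n := p + (K + 1) * q - (K + 1)).
    exists (cls (wpow u n ++ r)). rewrite bmul_cls. apply bcls_eq.
    apply rst_sym.
    replace ((wpow u n ++ r) ++ s0 ++ wpow u K ++ w2) with (wpow u (p + (K+1) * q) ++ w2).
    + apply pump; auto.
    + replace (p + (K + 1) * q) with (n + (1 + K)) by (unfold n; nia).
      rewrite !wpow_add. simpl. rewrite app_nil_r, Hr. rewrite <- !app_assoc. auto.
  - exists (cls (s0 ++ wpow u (K - p))). rewrite bmul_cls. f_equal.
    replace (wpow u K) with (wpow u (K - p) ++ wpow u p).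
    + rewrite <- !app_assoc; auto.
    + rewrite <- wpow_add. f_equal. lia.
Qed.

Lemma del_block pre b Mb T : (forall x, In x Mb -> E b x) ->
  D (pre ++ b :: Mb ++ T) (pre ++ b :: T).
Proof.
  induction Mb as [|m Mb IH]; intro H; simpl; [apply rt_refl|].
  eapply rt_trans; [apply rt_step, R1_intro, H; simpl; auto|].
  apply IH. intros; apply H; simpl; auto.
Qed.

Lemma chain_bstep x y : bstep p q x y -> chain x = chain y.
Proof.
  intros [w1 u w2 Hu]. unfold chain.
  rewrite (Nat.add_comm p q), wpow_add, <- app_assoc.
  rewrite (Sf_app w1 (wpow u q ++ wpow u p ++ w2)), (Sf_app w1 (wpow u p ++ w2)),
    (Sf_app (wpow u q) (wpow u p ++ w2)).
  set (c := cls (wpow u p ++ w2)).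
  replace (map (fun s => cls (s ++ wpow u q ++ wpow u p ++ w2)) (sfxne w1))
    with (map (fun s => cls (s ++ wpow u p ++ w2)) (sfxne w1)).
  2: { apply map_ext. intro s. apply bcls_eq. apply rst_sym, rst_step.
       pose proof (bstep_intro p q s w2 Hu) as H.
       rewrite (Nat.add_comm p q), wpow_add, <- app_assoc in H. exact H. }
  destruct (Sf_head (wpow u p ++ w2)) as [T HT]. rewrite HT. fold c.
  assert (Hq : wpow u q <> []) by (apply wpow_ne; auto; lia).
  destruct (wpow u q) as [|a0 l0] eqn:Eq; [tauto|].
  change (sfxne (a0 :: l0)) with ((a0 :: l0) :: sfxne l0). rewrite <- Eq.
  simpl map.
  assert (Hc : cls (wpow u q ++ wpow u p ++ w2) = c).
  { apply bcls_eq. rewrite app_assoc, <- wpow_add, Nat.add_comm.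
    pose proof (bstep_intro p q [] w2 Hu) as H. simpl in H. apply rst_step, H. }
  rewrite Hc. apply lm_D.
  replace ((c :: map (fun s => cls (s ++ wpow u p ++ w2)) (sfxne l0)) ++ c :: T)
    with (c :: (map (fun s => cls (s ++ wpow u p ++ w2)) (sfxne l0) ++ [c]) ++ T)
    by (rewrite <- (app_assoc _ [c] T); reflexivity).
  apply del_block. intros z Hz. apply in_app_or in Hz. destruct Hz as [Hz|[Hz|[]]].
  - apply in_map_iff in Hz. destruct Hz as [s [<- Hs]].
    assert (Hs' : In s (sfxne (wpow u q))) by (rewrite Eq; simpl; auto).
    apply sfxne_in in Hs'. destruct Hs' as [_ [r' Hr']].
    destruct (sfx_decomp u q s r' Hr') as [r [s0 [k [Hr Hk]]]].
    subst s. rewrite <- app_assoc, (app_assoc (wpow u k) (wpow u p) w2), <- wpow_add. apply key_E with r; auto; lia.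
  - subst z. apply E_refl.
Qed.

Lemma chain_bc x y : bc x y -> chain x = chain y.
Proof. induction 1; [apply chain_bstep; auto | auto | congruence | congruence]. Qed.

Goal True. idtac. Abort.
End B.

Theorem lemma9p1 (X : Type) (p q : nat) (hp : 1 <= p) (hq : 1 <= q) :
  exists phi : BI X p q -> list (BI X p q),
    (forall a b, phi a = phi b -> a = b) /\
    (forall a, RhX (@bmul X p q) (bone X p q) (@bgen X p q) (phi a)) /\
    (forall c, RhX (@bmul X p q) (bone X p q) (@bgen X p q) c -> exists a, phi a = c) /\
    phi (bone X p q) = [bone X p q] /\
    (forall a b, phi (bmul a b) = rh_mul (@bmul X p q) (bone X p q) (phi a) (phi b)) /\
    (forall x, phi (bgen p q x) = [bgen p q x; bone X p q]).
Proof.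
  exists (fun a => chain X p q (brep a)).
  assert (Hcls : forall w, chain X p q (brep (bcls p q w)) = chain X p q w).
  { intro w. symmetry. apply (chain_bc X p q hp hq). apply brep_bcls. }
  assert (H0 : chain X p q [] = [bone X p q]) by reflexivity.
  assert (H1 : forall x, chain X p q [x] = [bgen p q x; bone X p q]).
  { intro x. unfold chain, Sf. cbn -[eqLb]. rewrite eqLb_false; [reflexivity|].
    apply (ne_not_one X p q hp hq). discriminate. }
  assert (Hmul : forall a b : BI X p q, chain X p q (brep (bmul a b)) =
     rh_mul (@bmul X p q) (bone X p q) (chain X p q (brep a)) (chain X p q (brep b))).
  { intros a b. unfold bmul at 1. rewrite Hcls. apply (chain_hom X p q hp hq). }
  split; [|split; [|split; [|split; [|split]]]].
  - intros a b H. destruct (chain_head X p q (brep a)) as [Ta HTa].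
    destruct (chain_head X p q (brep b)) as [Tb HTb].
    rewrite HTa, HTb in H. assert (E : bcls p q (brep a) = bcls p q (brep b)) by congruence. rewrite !bcls_brep in E. exact E.
  - intro a. generalize (brep a). intro w. induction w as [|x w IH].
    + rewrite H0. apply RhX_one.
    + change (x :: w) with ([x] ++ w). rewrite (chain_hom X p q hp hq), H1.
      apply RhX_mul; auto. apply RhX_gen.
  - intros c Hc. induction Hc.
    + exists (bone X p q). unfold bone at 1. rewrite Hcls. exact H0.
    + exists (bgen p q x). unfold bgen at 1. rewrite Hcls. apply H1.
    + destruct IHHc1 as [a Ha], IHHc2 as [b Hb]. exists (bmul a b). rewrite Hmul; subst; auto.
  - unfold bone at 1. rewrite Hcls. exact H0.
  - exact Hmul.
  - intro x. unfold bgen at 1. rewrite Hcls. apply H1.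
Qed.
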